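(* Let $K$ be a virtual knot diagram. If $W_K(t)\neq W_K(t^{-1})$, then the flat virtual knot $F(K)$ is nontrivial, i.e. not equivalent to the flat diagram of an embedded circle with no crossings.
   Context: Virtual knot diagrams, real crossings with writhes $w(c)\in\{\pm1\}$, generalized Reidemeister moves as usual. Gauss diagram $G(K)$: counterclockwise circle with, for each real crossing $c$, a chord directed from the overcrossing preimage to the undercrossing preimage, signed $w(c)$. A chord $d$ crosses $c$ if their endpoints interlace; viewing $c$ as an arrow in the disk, $d$ crosses $c$ from left to right if its tail is left of $c$ and its head right of $c$, else from right to left. With $r_\pm(c)$, $l_\pm(c)$ the numbers of chords of sign $\pm$ crossing $c$ from left to right, resp. right to left, $\mathrm{Ind}(c)=r_+(c)-r_-(c)-l_+(c)+l_-(c)$. Writhe polynomial $W_K(t)=\sum_{n\neq0}a_n(K)t^n$ with $a_n(K)=\sum_{\mathrm{Ind}(c)=n}w(c)$. $F(K)$ is the flat virtual knot obtained by replacing every real crossing of $K$ by a flat crossing; flat virtual knots are considered up to flat generalized Reidemeister moves. *)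

(* Defs.v *)
(* Virtual knot diagrams are represented by their Gauss
   diagrams (Gauss words read counterclockwise from a base point), flat
   virtual knots by flat Gauss diagrams (virtual strings) modulo the
   Gauss-diagram versions of the flat generalized Reidemeister moves. *)
From HB Require Import structures.
From mathcomp Require Import all_boot all_order all_algebra.
From Stdlib Require Import Relations.
Set Implicit Arguments. Unset Strict Implicit. Unset Printing Implicit Defensive.
Import Order.TTheory GRing.Theory Num.Theory.

(* A letter (c, true) is the tail (overcrossing preimage) of chord c,
   (c, false) its head (undercrossing preimage). *)
Definition letter := (nat * bool)%type.
Definition gword := seq letter.

Definition gauss_wf (w : gword) : bool :=
  uniq w && all (fun e : letter => (e.1, ~~ e.2) \in w) w.

Definition labels (w : gword) : seq nat := undup (map fst w).

Definition tailpos (w : gword) (c : nat) : nat := index (c, true) w.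
Definition headpos (w : gword) (c : nat) : nat := index (c, false) w.

(* position p lies to the right of chord c (viewed as an arrow in the disk
   bounded by the counterclockwise circle): strictly inside the
   counterclockwise arc from the tail of c to the head of c *)
Definition right_of (w : gword) (c p : nat) : bool :=
  let ti := tailpos w c in let hi := headpos w c in
  if ti < hi then (ti < p) && (p < hi) else (ti < p) || (p < hi).

Definition wsign (s : nat -> bool) (c : nat) : int :=
  if s c then 1%R else (-1)%R.

Definition ind_contrib (w : gword) (s : nat -> bool) (c d : nat) : int :=
  let rt := right_of w c (tailpos w d) in
  let rh := right_of w c (headpos w d) in
  if ~~ rt && rh then wsign s d
  else if rt && ~~ rh then (- wsign s d)%R
  else 0%R.

(* Ind(c) = r_+(c) - r_-(c) - l_+(c) + l_-(c) *)
Definition Ind (w : gword) (s : nat -> bool) (c : nat) : int :=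
  (\sum_(d <- labels w | d != c) ind_contrib w s c d)%R.

(* coefficients of the writhe polynomial W_K(t) = sum_{n<>0} a_n t^n,
   as a function int -> int (coefficient of t^n; coefficient of t^0 is 0) *)
Definition writhe_poly (w : gword) (s : nat -> bool) (n : int) : int :=
  if n == 0%R then 0%R
  else (\sum_(c <- labels w | Ind w s c == n) wsign s c)%R.

(* The flat arrow at a crossing goes from the
   strand A to the strand B where B crosses A from right to left; this is
   the Gauss arrow for a positive crossing and its reverse for a negative
   one. *)
Definition flat_of (w : gword) (s : nat -> bool) : gword :=
  map (fun e : letter => (e.1, if s e.1 then e.2 else ~~ e.2)) w.

Definition fresh (a : nat) (w : gword) : bool := a \notin map fst w.

Definition flag_in (x : nat) (p1 p2 : letter) : bool :=
  if p1.1 == x then p1.2 else p2.2.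

Definition pair_is (p1 p2 : letter) (x y : nat) : bool :=
  ((p1.1 == x) && (p2.1 == y)) || ((p1.1 == y) && (p2.1 == x)).

(* Realizability of three pairwise crossing strands forming a triangle.
   Strand 1 carries (p1,p2), strand 2 (q1,q2), strand 3 (r1,r2), in the
   order of traversal.  x12, x13, x23 are the crossings.  o_i records the
   order of the crossings on strand i, s_ij whether the flat arrow at x_ij
   goes from strand i to strand j.  Three oriented lines realize the data
   iff o1 o3 = s12 s23 and o2 o3 = s12 s13 (as signs). *)
Definition tri_ok (p1 p2 q1 q2 r1 r2 : letter) : Prop :=
  exists x12 x13 x23 : nat,
    [/\ uniq [:: x12; x13; x23], pair_is p1 p2 x12 x13,
        pair_is q1 q2 x12 x23 & pair_is r1 r2 x13 x23] /\
    let o1 := p1.1 == x12 in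
    let o2 := q1.1 == x12 in
    let o3 := r1.1 == x13 in
    let s12 := flag_in x12 p1 p2 in
    let s13 := flag_in x13 p1 p2 in
    let s23 := flag_in x23 q1 q2 in
    ((o1 == o3) == (s12 == s23)) /\ ((o2 == o3) == (s12 == s13)).

Inductive flat_move : gword -> gword -> Prop :=
| FM_rot (w : gword) : flat_move w (rot 1 w)
| FM_relabel (w : gword) (f : nat -> nat) :
    injective f -> flat_move w (map (fun e : letter => (f e.1, e.2)) w)
| FM_R1 (u v : gword) (a : nat) (b : bool) :
    fresh a (u ++ v) ->
    flat_move (u ++ v) (u ++ [:: (a, b); (a, ~~ b)] ++ v)
| FM_R2 (u1 u2 u3 : gword) (a b : nat) (t swap : bool) :
    a != b -> fresh a (u1 ++ u2 ++ u3) -> fresh b (u1 ++ u2 ++ u3) ->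
    flat_move (u1 ++ u2 ++ u3)
      (u1 ++ [:: (a, t); (b, ~~ t)] ++ u2 ++
       (if swap then [:: (b, t); (a, ~~ t)] else [:: (a, ~~ t); (b, t)]) ++ u3)
| FM_R3 (u1 u2 u3 u4 : gword) (p1 p2 q1 q2 r1 r2 : letter) :
    tri_ok p1 p2 q1 q2 r1 r2 ->
    flat_move (u1 ++ [:: p1; p2] ++ u2 ++ [:: q1; q2] ++ u3 ++ [:: r1; r2] ++ u4)
              (u1 ++ [:: p2; p1] ++ u2 ++ [:: q2; q1] ++ u3 ++ [:: r2; r1] ++ u4).

Definition flat_equiv : gword -> gword -> Prop :=
  clos_refl_sym_trans gword flat_move.

Definition trivial_flat : gword := [::].

(* Main.v *)
Require Import Defs.
From HB Require Import structures.
From mathcomp Require Import all_boot all_order all_algebra.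
From mathcomp Require Import zify.
From Stdlib Require Import Relations FunctionalExtensionality.
Import Order.TTheory GRing.Theory Num.Theory.
Set Implicit Arguments. Unset Strict Implicit. Unset Printing Implicit Defensive.

Definition ro (ti hi p : nat) : bool :=
  if ti < hi then (ti < p) && (p < hi) else (ti < p) || (p < hi).
Definition dirf (rt rh : bool) : int :=
  if ~~ rt && rh then 1%R else if rt && ~~ rh then (-1)%R else 0%R.
Definition TT : nat -> bool := fun _ => true.
Definition J w c := Ind w TT c.
Definition term (x n : int) : int :=
  ((if x == n then 1 else 0) - (if x == - n then 1 else 0))%R.
Definition inv (w : gword) (n : int) : int :=
  (\sum_(c <- labels w) term (J w c) n)%R.

Lemma contribE w c d : ind_contrib w TT c d =
  dirf (ro (tailpos w c) (headpos w c) (tailpos w d))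
       (ro (tailpos w c) (headpos w c) (headpos w d)).
Proof. by []. Qed.

Lemma ro_transfer g ti hi p :
  (forall x y, x \in [:: ti; hi; p] -> y \in [:: ti; hi; p] -> (g x < g y) = (x < y)) ->
  ro (g ti) (g hi) (g p) = ro ti hi p.
Proof. by move=> H; rewrite /ro !H // !inE eqxx ?orbT. Qed.

Lemma ro_swap ti hi p : ti != hi -> p != ti -> p != hi -> ro hi ti p = ~~ ro ti hi p.
Proof.
rewrite /ro => h1 h2 h3.
case: (ltngtP ti hi) => H; try lia.
Qed.

Definition flip (s : nat -> bool) (e : letter) : letter :=
  (e.1, if s e.1 then e.2 else ~~ e.2).

Lemma flipK s : involutive (flip s).
Proof. by case=> c b; rewrite /flip /=; case: (s c) => //; rewrite negbK. Qed.

Lemma flip_inj s : injective (flip s).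
Proof. exact: inv_inj (@flipK s). Qed.

Lemma labels_flat w s : labels (flat_of w s) = labels w.
Proof. by rewrite /labels /flat_of -map_comp. Qed.

Lemma tail_flat w s c : tailpos (flat_of w s) c = index (c, s c) w.
Proof.
rewrite /tailpos /flat_of -/(flip s).
have -> : (c, true) = flip s (c, s c) by rewrite /flip /=; case: (s c).
by rewrite index_map //; apply: flip_inj.
Qed.

Lemma head_flat w s c : headpos (flat_of w s) c = index (c, ~~ s c) w.
Proof.
rewrite /headpos /flat_of -/(flip s).
have -> : (c, false) = flip s (c, ~~ s c) by rewrite /flip /=; case: (s c).
by rewrite index_map //; apply: flip_inj.
Qed.

Lemma wf_mem w c b : gauss_wf w -> c \in labels w -> (c, b) \in w.
Proof.
case/andP=> _ /allP Hall; rewrite /labels mem_undup => /mapP [[c' b'] Hin /= ->].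
case: (eqVneq b b') => [-> //|].
by move: (Hall _ Hin) => /=; case: b b' {Hin} => [] [].
Qed.

Lemma index_inj_in (w : gword) x y : x \in w -> index x w = index y w -> x = y.
Proof. by move=> Hx Hi; rewrite -(nth_index x Hx) Hi nth_index // -index_mem -Hi index_mem. Qed.

Lemma index_neq (w : gword) x y : x \in w -> x != y -> index x w != index y w.
Proof. by move=> Hx; apply: contra => /eqP /(index_inj_in Hx) ->. Qed.

Lemma dirfN x y : dirf (~~ x) (~~ y) = (- dirf x y)%R.
Proof. by case: x; case: y. Qed.
Lemma dirfC x y : dirf y x = (- dirf x y)%R.
Proof. by case: x; case: y. Qed.

Lemma contribS w s c d : ind_contrib w s c d =
  (wsign s d * dirf (ro (tailpos w c) (headpos w c) (tailpos w d))
       (ro (tailpos w c) (headpos w c) (headpos w d)))%R.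
Proof.
rewrite /ind_contrib /dirf.
change (right_of w c (tailpos w d)) with (ro (tailpos w c) (headpos w c) (tailpos w d)).
change (right_of w c (headpos w d)) with (ro (tailpos w c) (headpos w c) (headpos w d)).
case: (ro _ _ (tailpos w d)); case: (ro _ _ (headpos w d)) => /=;
  by rewrite ?mulr1 ?mulrN1 ?mulr0.
Qed.

Lemma flat_core (sc sd : bool) tc hc td hd :
  tc != hc -> td != tc -> td != hc -> hd != tc -> hd != hc ->
  dirf (ro (if sc then tc else hc) (if sc then hc else tc) (if sd then td else hd))
       (ro (if sc then tc else hc) (if sc then hc else tc) (if sd then hd else td)) =
  ((if sc then 1 else -1) * ((if sd then 1 else -1) * dirf (ro tc hc td) (ro tc hc hd)))%R.
Proof.
move=> h1 h2 h3 h4 h5.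
case: sc; case: sd.
- by rewrite !mul1r.
- by rewrite dirfC mul1r mulN1r.
- by rewrite (@ro_swap tc hc td) // (@ro_swap tc hc hd) // dirfN mulN1r mul1r.
- by rewrite (@ro_swap tc hc td) // (@ro_swap tc hc hd) // dirfN dirfC opprK mulN1r mulN1r opprK.
Qed.

Lemma contrib_flat w s c d : gauss_wf w -> c \in labels w -> d \in labels w -> d != c ->
  ind_contrib (flat_of w s) TT c d = (wsign s c * ind_contrib w s c d)%R.
Proof.
move=> wf Hc Hd Hdc.
have Hne : forall (b b' : bool) (x x' : nat), x \in labels w -> x' \in labels w -> (x, b) != (x', b') ->
   index (x, b) w != index (x', b') w.
  by move=> b b' x x' Hx Hx' H; apply: index_neq => //; apply: wf_mem.
have Hcd : forall b b' : bool, (c, b) != (d, b') by move=> b b'; apply/negP => /eqP [E _]; rewrite E eqxx in Hdc.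
have Hcc : forall b : bool, (c, b) != (c, ~~ b) by case; apply/negP => /eqP [].
have Hdd' : forall b b' : bool, (d, b) != (c, b') by move=> b b'; rewrite eq_sym.
have Hdd : forall b : bool, (d, b) != (d, ~~ b) by case; apply/negP => /eqP [].
rewrite contribE contribS !tail_flat !head_flat /tailpos /headpos.
set tc := index (c, true) w; set hc := index (c, false) w.
set td := index (d, true) w; set hd := index (d, false) w.
have h1 : tc != hc := Hne true false c c Hc Hc (Hcc true).
have h2 : td != tc := Hne true true d c Hd Hc (Hdd' true true).
have h3 : td != hc := Hne true false d c Hd Hc (Hdd' true false).
have h4 : hd != tc := Hne false true d c Hd Hc (Hdd' false true).
have h5 : hd != hc := Hne false false d c Hd Hc (Hdd' false false).
have E1 : forall x b, index (x, b) w = if b then index (x, true) w else index (x, false) w.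
  by move=> x []. 
rewrite (E1 c (s c)) (E1 c (~~ s c)) (E1 d (s d)) (E1 d (~~ s d)) !if_neg.
exact: flat_core.
Qed.

Lemma wf_flat w s : gauss_wf w -> gauss_wf (flat_of w s).
Proof.
case/andP=> Hu /allP Ha; apply/andP; split.
  by rewrite /flat_of -/(flip s) (map_inj_uniq (@flip_inj s)).
apply/allP => e; rewrite /flat_of -/(flip s) => /mapP [e' He' ->].
have := Ha _ He'; rewrite /= => Hp.
have -> : ((flip s e').1, ~~ (flip s e').2) = flip s (e'.1, ~~ e'.2).
  by rewrite /flip /=; case: (s e'.1).
exact: map_f.
Qed.

Lemma Ind_flat w s c : gauss_wf w -> c \in labels w ->
  J (flat_of w s) c = (wsign s c * Ind w s c)%R.
Proof.
move=> wf Hc; rewrite /J /Ind labels_flat mulr_sumr.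
rewrite big_seq_cond [in RHS]big_seq_cond; apply: eq_bigr => d /andP [Hd Hdc].
exact: contrib_flat.
Qed.

Lemma writhe_inv w s n : gauss_wf w -> n != 0%R ->
  (writhe_poly w s n - writhe_poly w s (- n))%R = inv (flat_of w s) n.
Proof.
move=> wf Hn; rewrite /writhe_poly (negbTE Hn) oppr_eq0 (negbTE Hn).
rewrite /inv labels_flat (big_mkcond (fun c => Ind w s c == n)) (big_mkcond (fun c => Ind w s c == (- n)%R)).
rewrite -sumrB; apply: eq_big_seq => c Hc /=.
rewrite Ind_flat // /term /wsign.
case: (s c); rewrite ?mul1r ?mulN1r.
  by case: ifP; case: ifP; rewrite ?subr0 ?sub0r.
rewrite eqr_oppLR [(- _ == _)%R]eqr_oppLR opprK.
by case: ifP; case: ifP; rewrite ?subr0 ?sub0r ?opprK ?subrr // => _ _; rewrite opprB.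
Qed.

Lemma ro_cyc n ti hi p : ti < n -> hi < n -> p < n -> ti != hi -> p != ti -> p != hi ->
  let g k := if k == 0 then n.-1 else k.-1 in
  ro (g ti) (g hi) (g p) = ro ti hi p.
Proof.
move=> h1 h2 h3 h4 h5 h6 g; rewrite /g /ro.
case: eqP => E1; case: eqP => E2; case: eqP => E3;
repeat case: ifP; lia.
Qed.

Lemma wf_perm x y : perm_eq x y -> gauss_wf x = gauss_wf y.
Proof.
move=> Hp; rewrite /gauss_wf (perm_uniq Hp) (perm_all _ Hp).
congr (_ && _); apply: eq_all => e; exact: (perm_mem Hp).
Qed.

Lemma labels_uniq w : uniq (labels w).
Proof. exact: undup_uniq. Qed.

Lemma labels_perm_mem x y : x =i y -> perm_eq (labels x) (labels y).
Proof.
move=> H; apply: uniq_perm; try exact: labels_uniq.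
move=> c; rewrite /labels !mem_undup; apply/mapP/mapP => [] [e He ->]; exists e => //.
  by rewrite -H. by rewrite H.
Qed.

Lemma inv_eq x y n : perm_eq (labels x) (labels y) ->
  (forall c, c \in labels x -> J x c = J y c) -> inv x n = inv y n.
Proof.
move=> Hp HJ; rewrite /inv -(perm_big _ Hp) /=.
by apply: eq_big_seq => c Hc; rewrite HJ.
Qed.

Lemma J_eq x y c : perm_eq (labels x) (labels y) ->
  (forall d, d \in labels x -> d != c -> ind_contrib x TT c d = ind_contrib y TT c d) ->
  J x c = J y c.
Proof.
move=> Hp HC; rewrite /J /Ind -(perm_big _ Hp) /=.
by rewrite big_seq_cond [in RHS]big_seq_cond; apply: eq_bigr => d /andP [Hd Hdc]; rewrite HC.
Qed.

Lemma lab_in w e : e \in w -> e.1 \in labels w.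
Proof. by move=> He; rewrite /labels mem_undup; apply: map_f. Qed.

Lemma index_rot1 (e : letter) u z : uniq (e :: u) -> z \in e :: u ->
  index z (rot 1 (e :: u)) =
  (if index z (e :: u) == 0 then (size (e :: u)).-1 else (index z (e :: u)).-1).
Proof.
move=> /andP [He Hu] Hz; rewrite rot1_cons -cats1 index_cat /=.
case: (eqVneq z e) => [->|Hez] /=.
  by rewrite (negbTE He) addn0.
move: Hz; rewrite inE (negbTE Hez) /= => Hz; rewrite Hz ?eq_sym ?(negbTE Hez) /= ?Hz //.
Qed.

Lemma rot_inv w n : gauss_wf w -> n != 0%R -> inv w n = inv (rot 1 w) n.
Proof.
case: w => [//|e u] wf Hn.
have Hp : perm_eq (labels (e :: u)) (labels (rot 1 (e :: u))).
  by apply: labels_perm_mem => z; rewrite mem_rot.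
apply: inv_eq => // c Hc; apply: J_eq => // d Hd Hdc.
have Hu : uniq (e :: u) by case/andP: wf.
have Hin : forall x b, x \in labels (e :: u) -> (x, b) \in e :: u by move=> x b; apply: wf_mem.
have Hlt : forall x b, x \in labels (e :: u) -> index (x, b) (e :: u) < size (e :: u).
  by move=> x b Hx; rewrite index_mem; apply: Hin.
have Hne : forall (b b' : bool) (x x' : nat), x \in labels (e :: u) -> (x, b) != (x', b') ->
   index (x, b) (e :: u) != index (x', b') (e :: u).
  by move=> b b' x x' Hx H; apply: index_neq => //; apply: Hin.
have Hdd' : forall b b' : bool, (d, b) != (c, b') by move=> b b'; apply/negP => /eqP [E _]; rewrite E eqxx in Hdc.
have Hcc : forall b : bool, (c, b) != (c, ~~ b) by case; apply/negP => /eqP [].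
rewrite !contribE /tailpos /headpos !index_rot1 //; try exact: Hin.
rewrite !(ro_cyc (n:=size (e :: u))) //; try exact: Hlt;
 try exact: (Hne true false c c Hc (Hcc true));
 try exact: (Hne _ _ _ _ Hd (Hdd' _ _)).
Qed.

Section Relabel.
Variable f : nat -> nat.
Hypothesis finj : injective f.
Definition rlF (e : letter) : letter := (f e.1, e.2).
Lemma rlF_inj : injective rlF.
Proof. by case=> a b [c d] [] /finj -> ->. Qed.

Lemma labels_rl w : labels (map rlF w) = map f (labels w).
Proof.
rewrite /labels (_ : map fst (map rlF w) = map f (map fst w)).
  exact: undup_map_inj.
by rewrite -!map_comp.
Qed.

Lemma index_rl w c b : index (f c, b) (map rlF w) = index (c, b) w.
Proof. by rewrite -[(f c, b)]/(rlF (c, b)) index_map //; apply: rlF_inj. Qed.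

Lemma wf_rl w : gauss_wf (map rlF w) = gauss_wf w.
Proof.
rewrite /gauss_wf (map_inj_uniq rlF_inj) all_map; congr (_ && _).
apply: eq_all => -[c b] /=.
by rewrite -[(f c, ~~ b)]/(rlF (c, ~~ b)) mem_map //; apply: rlF_inj.
Qed.

Lemma rl_inv w n : inv w n = inv (map rlF w) n.
Proof.
rewrite /inv labels_rl big_map; apply: eq_bigr => c _; congr term.
rewrite /J /Ind labels_rl big_map; apply: eq_big => [d|d _]; first by rewrite inj_eq.
by rewrite !contribE /tailpos /headpos !index_rl.
Qed.
End Relabel.

Definition ins_g (m k i : nat) := if i < m then i else i + k.

Lemma index_ins (u X v : gword) x : x \notin X ->
  index x (u ++ X ++ v) = ins_g (size u) (size X) (index x (u ++ v)).
Proof.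
move=> Hx; rewrite !index_cat (negbTE Hx) /ins_g.
case: ifP => Hu; first by rewrite index_mem Hu.
set i := index x v; set su := size u; set sX := size X.
by case: ifP => ?; lia.
Qed.

Lemma ins_mono m k x y : (ins_g m k x < ins_g m k y) = (x < y).
Proof. rewrite /ins_g; repeat case: ifP => ?; lia. Qed.

Lemma notin_lab (X : gword) c b : c \notin map fst X -> (c, b) \notin X.
Proof. by apply: contra => H; apply/mapP; exists (c, b). Qed.

Lemma contrib_ins u X v c d : c \notin map fst X -> d \notin map fst X ->
  ind_contrib (u ++ X ++ v) TT c d = ind_contrib (u ++ v) TT c d.
Proof.
move=> Hc Hd; rewrite !contribE /tailpos /headpos !index_ins ?notin_lab //.
by rewrite !ro_transfer // => x y _ _; rewrite ins_mono.
Qed.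

Lemma wf_app (X v : gword) : uniq X -> (forall e, e \in X -> (e.1, ~~ e.2) \in X) ->
  (forall e, e \in X -> e.1 \notin map fst v) -> gauss_wf (X ++ v) = gauss_wf v.
Proof.
move=> HuX HcX Hf; rewrite /gauss_wf cat_uniq HuX all_cat /=.
have Hdis : ~~ has (mem X) v.
  apply/hasPn => e Hev; apply/negP => HeX.
  by move: (Hf _ HeX); rewrite (map_f fst Hev).
rewrite Hdis /=.
have -> : all (fun e : letter => (e.1, ~~ e.2) \in X ++ v) X.
  by apply/allP => e He; rewrite mem_cat HcX.
congr (_ && _); apply: eq_in_all => e Hev.
rewrite /= mem_cat.
case HX: ((e.1, ~~ e.2) \in X) => //=.
by move: (Hf _ HX) => /=; rewrite (map_f fst Hev).
Qed.

Lemma ro_adj ti hi m : ti != m -> ti != m.+1 -> hi != m -> hi != m.+1 ->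
  ro ti hi m.+1 = ro ti hi m.
Proof. move=> *; rewrite /ro; repeat case: ifP => ?; lia. Qed.

Lemma ro_pair1 m p : p != m -> p != m.+1 -> ro m m.+1 p = false.
Proof. move=> *; rewrite /ro; repeat case: ifP => ?; lia. Qed.
Lemma ro_pair2 m p : p != m -> p != m.+1 -> ro m.+1 m p = true.
Proof. move=> *; rewrite /ro; repeat case: ifP => ?; lia. Qed.

Lemma dirf_diag x : dirf x x = 0%R.
Proof. by case: x. Qed.

Lemma ins_ne m i : (ins_g m 2 i != m) && (ins_g m 2 i != m.+1).
Proof. rewrite /ins_g; case: ifP => ?; apply/andP; split; apply/eqP; lia. Qed.

Lemma term0 n : n != 0%R -> term 0 n = 0%R.
Proof.
move=> Hn; rewrite /term eq_sym (negbTE Hn).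
by rewrite (_ : (0 == - n)%R = false) // eq_sym oppr_eq0 (negbTE Hn).
Qed.

Lemma lab_ne w a c : fresh a w -> c \in labels w -> c != a.
Proof.
rewrite /fresh /labels mem_undup => Ha Hc; apply/eqP => E; subst.
by rewrite Hc in Ha.
Qed.

Lemma index_mid (u v : gword) x : x \notin u -> index x (u ++ x :: v) = size u.
Proof. by move=> Hx; rewrite index_cat (negbTE Hx) /= eqxx addn0. Qed.

Section R1.
Variables (u v : gword) (a : nat) (b : bool).
Hypothesis Hf : fresh a (u ++ v).
Let X : gword := [:: (a, b); (a, ~~ b)].
Let W := u ++ X ++ v.

Lemma R1_wf : gauss_wf W = gauss_wf (u ++ v).
Proof.
rewrite /W (wf_perm (permEl (perm_catCA u X v))) (@wf_app X (u ++ v)) //.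
- rewrite /X /= mem_seq1 andbT; apply/negP => /eqP []; by case: b.
- move=> e; rewrite /X !inE => /orP [] /eqP -> /=; by rewrite ?negbK eqxx ?orbT.
- move=> e; rewrite /X !inE => /orP [] /eqP -> /=; exact: Hf.
Qed.

Lemma R1_inv n : gauss_wf (u ++ v) -> n != 0%R -> inv W n = inv (u ++ v) n.
Proof.
move=> wf Hn.
have Hau : a \notin map fst u by move: Hf; rewrite /fresh map_cat mem_cat negb_or => /andP [].
have Hp : perm_eq (labels W) (a :: labels (u ++ v)).
  apply: uniq_perm; first exact: labels_uniq.
    rewrite /= labels_uniq andbT /labels mem_undup; exact: Hf.
  move=> c; rewrite /W /labels inE !mem_undup !map_cat !mem_cat /= !inE.
  by case: (c == a); rewrite ?orbT //= orbF.
have HX : forall c, c \in labels (u ++ v) -> c \notin map fst X.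
  by move=> c Hc; rewrite /= !inE (negbTE (lab_ne Hf Hc)).
have Hold : forall c d, c \in labels (u ++ v) -> d \in labels (u ++ v) ->
    ind_contrib W TT c d = ind_contrib (u ++ v) TT c d.
  by move=> c d Hc Hd; apply: contrib_ins; apply: HX.
have Hpos : forall c b', c \in labels (u ++ v) ->
    (index (c, b') W != size u) && (index (c, b') W != (size u).+1).
  by move=> c b' Hc; rewrite /W index_ins ?notin_lab ?HX // ins_ne.
have HtA : index (a, b) W = size u by rewrite /W index_mid // notin_lab.
have HhA : index (a, ~~ b) W = (size u).+1.
  have -> : W = (u ++ [:: (a, b)]) ++ (a, ~~ b) :: v by rewrite /W /X -catA.
  rewrite index_mid ?size_cat ?addn1 // mem_cat negb_or notin_lab //= mem_seq1.
  by apply/negP => /eqP []; case: b.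
have HtA' : tailpos W a = if b then size u else (size u).+1.
  by rewrite /tailpos; case: b HtA HhA => /= H1 H2; rewrite ?H1 ?H2.
have HhA' : headpos W a = if b then (size u).+1 else size u.
  by rewrite /headpos; case: b HtA HhA => /= H1 H2; rewrite ?H1 ?H2.
have Hca : forall c, c \in labels (u ++ v) -> ind_contrib W TT c a = 0%R.
  move=> c Hc; rewrite contribE HtA' HhA' /tailpos /headpos.
  case/andP: (Hpos c true Hc) => h1 h2; case/andP: (Hpos c false Hc) => h3 h4.
  by case: b HtA' HhA' => _ _; rewrite ro_adj // dirf_diag.
have Hac : forall d, d \in labels (u ++ v) -> ind_contrib W TT a d = 0%R.
  move=> d Hd; rewrite contribE HtA' HhA' /tailpos /headpos.
  case/andP: (Hpos d true Hd) => h1 h2; case/andP: (Hpos d false Hd) => h3 h4.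
  by case: b HtA' HhA' => _ _; rewrite ?ro_pair1 ?ro_pair2.
rewrite /inv (perm_big _ Hp) big_cons.
have -> : J W a = 0%R.
  rewrite /J /Ind (perm_big _ Hp) big_cons eqxx /=.
  by rewrite big_seq_cond big1 // => d /andP [Hd _]; apply: Hac.
rewrite /= term0 // add0r; apply: eq_big_seq => c Hc; congr term.
rewrite /J /Ind (perm_big _ Hp) big_cons eq_sym (lab_ne Hf Hc) /= Hca // add0r.
by rewrite big_seq_cond [in RHS]big_seq_cond; apply: eq_bigr => d /andP [Hd _]; apply: Hold.
Qed.
End R1.

Ltac decide_lt := repeat match goal with |- context [?x < ?y] =>
   first [ rewrite (_ : (x < y) = true); last by lia
         | rewrite (_ : (x < y) = false); last by lia ] end.

Lemma termN x n : (term x n + term (- x) n)%R = 0%R.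
Proof.
rewrite /term eqr_oppLR [(- x == - n)%R]eqr_opp.
by case: (x == n); case: (x == - n)%R; rewrite ?subr0 ?sub0r ?subrr // addrC subrr.
Qed.

Lemma perm_R2 (u1 u2 u3 A B : gword) :
  perm_eq (u1 ++ A ++ u2 ++ B ++ u3) ((A ++ B) ++ (u1 ++ u2 ++ u3)).
Proof. by apply/permP => p; rewrite !count_cat; lia. Qed.

Section R2.
Variables (u1 u2 u3 : gword) (a b : nat) (t swap : bool).
Hypothesis Hab : a != b.
Hypothesis Hfa : fresh a (u1 ++ u2 ++ u3).
Hypothesis Hfb : fresh b (u1 ++ u2 ++ u3).
Let O := u1 ++ u2 ++ u3.
Let A : gword := [:: (a, t); (b, ~~ t)].
Let B : gword := if swap then [:: (b, t); (a, ~~ t)] else [:: (a, ~~ t); (b, t)].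
Let W := u1 ++ A ++ u2 ++ B ++ u3.

Lemma Hba : b != a. Proof. by rewrite eq_sym. Qed.

Lemma R2_wf : gauss_wf W = gauss_wf O.
Proof.
have Hab' := negbTE Hab; have Hba' := negbTE Hba.
rewrite /W (wf_perm (perm_R2 _ _ _ _ _)) (@wf_app (A ++ B) O) //.
- by rewrite /A /B; case: swap; case: t; rewrite /= !inE !xpair_eqE ?Hab' ?Hba' ?eqxx /= ?andbF ?andbT.
- by move=> e; rewrite /A /B; case: swap; case: t; rewrite /= !inE => /or4P [] /eqP -> /=;
     rewrite !xpair_eqE ?Hab' ?Hba' ?eqxx /= ?andbF ?andbT ?orbT.
- by move=> e; rewrite /A /B; case: swap; case: t; rewrite /= !inE => /or4P [] /eqP -> /=.
Qed.

Lemma R2_inv n : gauss_wf O -> n != 0%R -> inv W n = inv O n.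
Proof.
move=> wf Hn.
have Hab' := negbTE Hab; have Hba' := negbTE Hba.
have Hf1 : forall x (bb : bool), x \in [:: a; b] -> (x, bb) \notin u1.
  move=> x bb; rewrite !inE => /orP [] /eqP ->; apply: notin_lab; [move: Hfa | move: Hfb];
  by rewrite /fresh !map_cat !mem_cat !negb_or => /and3P [].
have Hf2 : forall x (bb : bool), x \in [:: a; b] -> (x, bb) \notin u2.
  move=> x bb; rewrite !inE => /orP [] /eqP ->; apply: notin_lab; [move: Hfa | move: Hfb];
  by rewrite /fresh !map_cat !mem_cat !negb_or => /and3P [].
set m1 := size u1; set m2 := size u1 + 2 + size u2.
set A1 := (a, t); set A2 := (b, ~~ t).
set B1 := if swap then (b, t) else (a, ~~ t).
set B2 := if swap then (a, ~~ t) else (b, t).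
have EB : B = [:: B1; B2] by rewrite /B /B1 /B2; case: swap.
have iA1 : index A1 W = m1.
  by rewrite /W /A index_mid // Hf1 // inE eqxx.
have iA2 : index A2 W = m1.+1.
  have -> : W = (u1 ++ [:: A1]) ++ A2 :: u2 ++ B ++ u3 by rewrite /W /A -catA.
  rewrite index_mid ?size_cat ?addn1 // mem_cat negb_or Hf1 ?inE ?eqxx ?orbT //=.
  by rewrite /A1 /A2 xpair_eqE Hba'.
have iB1 : index B1 W = m2.
  have -> : W = (u1 ++ A ++ u2) ++ B1 :: B2 :: u3 by rewrite /W EB -!catA.
  rewrite index_mid; first by rewrite !size_cat /m2 /=; lia.
  rewrite !mem_cat !negb_or /B1 /A1 /A2.
  by case: swap; case: t; rewrite Hf1 ?Hf2 ?inE ?eqxx ?orbT //= !xpair_eqE ?Hab' ?Hba' ?eqxx /= ?andbF.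
have iB2 : index B2 W = m2.+1.
  have -> : W = (u1 ++ A ++ u2 ++ [:: B1]) ++ B2 :: u3 by rewrite /W EB -!catA.
  rewrite index_mid; first by rewrite !size_cat /m2 /=; lia.
  rewrite !mem_cat !negb_or /B1 /B2 /A1 /A2.
  by case: swap; case: t; rewrite Hf1 ?Hf2 ?inE ?eqxx ?orbT //= !xpair_eqE ?Hab' ?Hba' ?eqxx /= ?andbF.
have Hnot : forall c (bb : bool), c \in labels O -> (c, bb) \notin A /\ (c, bb) \notin B.
  move=> c bb Hc; have ca := negbTE (lab_ne Hfa Hc); have cb := negbTE (lab_ne Hfb Hc).
  by rewrite /A /B; case: swap; rewrite !inE !xpair_eqE ca cb.
have iold : forall c (bb : bool), c \in labels O ->
    index (c, bb) W = ins_g m1 2 (ins_g (size u1 + size u2) 2 (index (c, bb) O)).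
  move=> c bb Hc; case: (Hnot c bb Hc) => nA nB.
  have E : u1 ++ u2 ++ B ++ u3 = (u1 ++ u2) ++ B ++ u3 by rewrite catA.
  by rewrite /W index_ins // E index_ins // size_cat -catA EB.
have Hold : forall c d, c \in labels O -> d \in labels O ->
    ind_contrib W TT c d = ind_contrib O TT c d.
  move=> c d Hc Hd; rewrite !contribE /tailpos /headpos !iold //.
  by rewrite !ro_transfer // => x y _ _; rewrite !ins_mono.
have Hpos : forall c (bb : bool), c \in labels O -> let p := index (c, bb) W in
    [&& p != m1, p != m1.+1, p != m2 & p != m2.+1].
  move=> c bb Hc /=; rewrite iold // /m2 /m1.
  move: (index (c, bb) O) (size u1) (size u2) => i s1 s2.
  by rewrite /ins_g; case: (ltnP i (s1 + s2)) => h1 /=; case: ltnP => h2; apply/and4P; split; apply/eqP; lia.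
have Hm : m1.+1 < m2 by rewrite /m2; lia.
have Hab4 : [/\ tailpos W a = (if t then m1 else if swap then m2.+1 else m2),
                headpos W a = (if t then (if swap then m2.+1 else m2) else m1),
                tailpos W b = (if t then (if swap then m2 else m2.+1) else m1.+1)
              & headpos W b = (if t then m1.+1 else if swap then m2 else m2.+1)].
  move: iA1 iA2 iB1 iB2; rewrite /A1 /A2 /B1 /B2 /tailpos /headpos.
  by case: swap; case: t => /= -> -> -> ->.
case: Hab4 => ta ha tb hb.
have F1 : forall c, c \in labels O -> (ind_contrib W TT c a + ind_contrib W TT c b)%R = 0%R.
  move=> c Hc; rewrite !contribE ta ha tb hb.
  case/and4P: (Hpos c true Hc) => h1 h2 h3 h4; case/and4P: (Hpos c false Hc) => h5 h6 h7 h8.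
  rewrite /tailpos /headpos.
  by case: t; case: swap; rewrite ?(@ro_adj _ _ m1) ?(@ro_adj _ _ m2) // dirfC addrC subrr.
have F2 : forall d, d \in labels O -> ind_contrib W TT b d = (- ind_contrib W TT a d)%R.
  move=> d Hd; rewrite !contribE ta ha tb hb.
  case/and4P: (Hpos d true Hd) => h1 h2 h3 h4; case/and4P: (Hpos d false Hd) => h5 h6 h7 h8.
  move: h1 h2 h3 h4 h5 h6 h7 h8; rewrite /tailpos /headpos.
  set p := index (d, true) W; set q := index (d, false) W => h1 h2 h3 h4 h5 h6 h7 h8.
  rewrite -dirfN; congr dirf; rewrite /ro;
  by case: t; case: swap; repeat case: ifP => ?; lia.
have F3 : ind_contrib W TT a b = (- ind_contrib W TT b a)%R.
  rewrite !contribE ta ha tb hb /dirf /ro.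
  by case: t; case: swap; decide_lt.
have Hp : perm_eq (labels W) (a :: b :: labels O).
  apply: uniq_perm; first exact: labels_uniq.
    rewrite /= inE Hab' /= labels_uniq andbT /labels !mem_undup; exact/andP.
  move=> c; rewrite /W /A EB /labels !inE !mem_undup !map_cat !mem_cat /= !inE /B1 /B2.
  by case: swap; case: (c == a); case: (c == b); rewrite /= ?orbT ?orbF.
have JO : forall c, c \in labels O -> J W c = J O c.
  move=> c Hc; rewrite /J /Ind (perm_big _ Hp) !big_cons eq_sym (lab_ne Hfa Hc).
  rewrite eq_sym (lab_ne Hfb Hc) /= addrA F1 // add0r.
  by rewrite big_seq_cond [in RHS]big_seq_cond; apply: eq_bigr => d /andP [Hd _]; apply: Hold.
have JB : J W b = (- J W a)%R.
  rewrite /J /Ind (perm_big _ Hp) [in RHS](perm_big _ Hp) !big_cons /= Hab' !eqxx /=.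
  rewrite Hba' /= opprD F3 opprK.
  congr (_ + _)%R; rewrite -sumrN big_seq_cond [in RHS]big_seq_cond.
  apply: eq_big => [j|j /andP [Hj _]]; last by rewrite F2.
  by case Hj: (j \in labels O) => //=; rewrite (lab_ne Hfb Hj) (lab_ne Hfa Hj).
rewrite /inv (perm_big _ Hp) !big_cons /= addrA JB termN add0r.
by apply: eq_big_seq => c Hc; rewrite JO.
Qed.

End R2.

Definition swg (m k : nat) := if k == m then m.+1 else if k == m.+1 then m else k.

Lemma swg_mono m x y : ~~ (((x == m) && (y == m.+1)) || ((x == m.+1) && (y == m))) ->
  (swg m x < swg m y) = (x < y).
Proof. rewrite /swg => H; repeat case: ifP => /eqP ?; lia. Qed.

Lemma index_swap (u v : gword) (y z x : letter) : y != z ->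
  index x (u ++ z :: y :: v) = swg (size u) (index x (u ++ y :: z :: v)).
Proof.
move=> Hyz; rewrite !index_cat; case: ifP => Hu.
  have H : index x u < size u by rewrite index_mem.
  by move: H; rewrite /swg; set i := index x u; set m := size u => H; repeat case: ifP => /eqP ?; lia.
rewrite /= /swg; set m := size u.
case Ey: (y == x); case Ez: (z == x) => /=.
- by move: Hyz; rewrite (eqP Ey) (eqP Ez) eqxx.
- by repeat case: ifP => /eqP ?; lia.
- by repeat case: ifP => /eqP ?; lia.
- by set i := index x v; repeat case: ifP => /eqP ?; lia.
Qed.

Lemma swap_contrib (u v : gword) (y z : letter) c d :
  uniq (u ++ y :: z :: v) ->
  (forall b, (c, b) \in u ++ y :: z :: v) -> (forall b, (d, b) \in u ++ y :: z :: v) ->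
  y.1 != z.1 -> ~~ pair_is y z c d ->
  ind_contrib (u ++ z :: y :: v) TT c d = ind_contrib (u ++ y :: z :: v) TT c d.
Proof.
move=> Hu Hc Hd Hyz Hp.
set w := u ++ y :: z :: v.
have Hyz' : y != z by apply: contraNneq Hyz => ->.
have iy : index y w = size u by rewrite /w index_mid //; move: Hu; rewrite cat_uniq /= => /and3P [_ /norP [] ] .
have iz : index z w = (size u).+1.
  have E : w = (u ++ [:: y]) ++ z :: v by rewrite /w -catA.
  rewrite E index_mid ?size_cat ?addn1 //.
  move: Hu; rewrite -cat1s catA cat_uniq => /and3P [_ H _]; apply: contra H => Hzz.
  by rewrite /= Hzz.
have Hok : forall e f, e.1 \in [:: c; d] -> f.1 \in [:: c; d] -> e \in w -> f \in w ->
    ~~ (((index e w == size u) && (index f w == (size u).+1)) ||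
        ((index e w == (size u).+1) && (index f w == size u))).
  move=> e f He Hf Hew Hfw; apply/negP => /orP [] /andP [/eqP E /eqP F].
  - have Ee : e = y by apply: (index_inj_in Hew); rewrite E iy.
    have Ef : f = z by apply: (index_inj_in Hfw); rewrite F iz.
    subst; move: He Hf Hp Hyz; rewrite /pair_is !inE.
    by case/orP => /eqP ->; case/orP => /eqP ->; rewrite ?eqxx //= ?orbT.
  - have Ee : e = z by apply: (index_inj_in Hew); rewrite E iz.
    have Ef : f = y by apply: (index_inj_in Hfw); rewrite F iy.
    subst; move: He Hf Hp Hyz; rewrite /pair_is !inE.
    by case/orP => /eqP ->; case/orP => /eqP ->; rewrite ?eqxx //= ?orbT.
rewrite !contribE /tailpos /headpos !(@index_swap u v y z _ Hyz') -/w.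
have L : forall (b : bool) (x : nat), x \in [:: c; d] -> (x, b) \in w.
  by move=> b x; rewrite !inE => /orP [] /eqP ->.
have Lc : c \in [:: c; d] by rewrite inE eqxx.
have Ld : d \in [:: c; d] by rewrite !inE eqxx orbT.
by congr dirf; apply: ro_transfer => x0 y0; rewrite !inE => /or3P [] /eqP -> /or3P [] /eqP ->;
  apply: swg_mono; apply: Hok => //; apply: L.
Qed.

Lemma tri_core (W W' : gword) (x12 x13 x23 : nat) (p1 p2 q1 q2 r1 r2 : letter) (P : nat -> nat) :
  uniq [:: x12; x13; x23] ->
  pair_is p1 p2 x12 x13 -> pair_is q1 q2 x12 x23 -> pair_is r1 r2 x13 x23 ->
  (let o1 := p1.1 == x12 in
    let o2 := q1.1 == x12 in
    let o3 := r1.1 == x13 in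
    let s12 := flag_in x12 p1 p2 in
    let s13 := flag_in x13 p1 p2 in
    let s23 := flag_in x23 q1 q2 in
    ((o1 == o3) == (s12 == s23)) /\ ((o2 == o3) == (s12 == s13))) ->
  uniq [:: p1; p2; q1; q2; r1; r2] ->
  (forall i j k, ro (P i) (P j) (P k) = ro i j k) ->
  index p1 W = P 0 -> index p2 W = P 1 -> index q1 W = P 2 ->
  index q2 W = P 3 -> index r1 W = P 4 -> index r2 W = P 5 ->
  index p1 W' = P 1 -> index p2 W' = P 0 -> index q1 W' = P 3 ->
  index q2 W' = P 2 -> index r1 W' = P 5 -> index r2 W' = P 4 ->
  forall c, c \in [:: x12; x13; x23] ->
  (\sum_(d <- [:: x12; x13; x23] | d != c) ind_contrib W' TT c d =
   \sum_(d <- [:: x12; x13; x23] | d != c) ind_contrib W TT c d)%R.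
Proof.
rewrite /= !inE !negb_or andbT => /andP [/andP [n12 n13] n23].
have E12 := negbTE n12; have E13 := negbTE n13; have E23 := negbTE n23.
have E21 : (x13 == x12) = false by rewrite eq_sym.
have E31 : (x23 == x12) = false by rewrite eq_sym.
have E32 : (x23 == x13) = false by rewrite eq_sym.
destruct p1 as [l1 f1], p2 as [l2 f2], q1 as [l3 f3], q2 as [l4 f4], r1 as [l5 f5], r2 as [l6 f6].
rewrite /pair_is /=.
case/orP => /andP [/eqP -> /eqP ->]; case/orP => /andP [/eqP -> /eqP ->];
case/orP => /andP [/eqP -> /eqP ->];
rewrite /flag_in /= ?eqxx ?E12 ?E13 ?E23 ?E21 ?E31 ?E32 /=;
destruct f1, f2, f3, f4, f5, f6; rewrite /= ?eqxx ?E12 ?E13 ?E23 ?E21 ?E31 ?E32 /=;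
move=> [Hc1 Hc2]; try discriminate;
move=> /= Hun; move: Hun; rewrite ?inE ?xpair_eqE /= ?eqxx ?E12 ?E13 ?E23 ?E21 ?E31 ?E32 /= => Hun; try discriminate.
all: move=> HP i1 i2 i3 i4 i5 i6 j1 j2 j3 j4 j5 j6 c.
all: by rewrite !inE => /or3P [] /eqP ->; rewrite !big_cons !big_nil /= ?eqxx ?E12 ?E13 ?E23 ?E21 ?E31 ?E32 /=;
  rewrite !contribE /tailpos /headpos ?i1 ?i2 ?i3 ?i4 ?i5 ?i6 ?j1 ?j2 ?j3 ?j4 ?j5 ?j6 !HP.
Qed.

Lemma perm_sw (u v : gword) y z : perm_eq (u ++ y :: z :: v) (u ++ z :: y :: v).
Proof. by apply/permP => p; rewrite !count_cat /=; lia. Qed.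

Lemma idx_at (s1 s2 : gword) x : uniq (s1 ++ x :: s2) -> index x (s1 ++ x :: s2) = size s1.
Proof.
rewrite cat_uniq /= => /and3P [_ H _]; apply: index_mid.
by apply: contra H => Hx; rewrite /= Hx.
Qed.


Definition Ppos (a b c k : nat) :=
  if k < 2 then a + k else if k < 4 then a + 2 + b + (k - 2) else a + 2 + b + 2 + c + (k - 4).
Lemma Ppos_mono a b c x y : (Ppos a b c x < Ppos a b c y) = (x < y).
Proof. rewrite /Ppos; repeat case: ifP => ?; lia. Qed.
Lemma Ppos_inj a b c : injective (Ppos a b c).
Proof.
move=> x y E; case: (ltngtP x y) => // H.
- by move: H; rewrite -(Ppos_mono a b c) E ltnn.
- by move: H; rewrite -(Ppos_mono a b c) E ltnn.
Qed.
Lemma Ppos_ro a b c i j k : ro (Ppos a b c i) (Ppos a b c j) (Ppos a b c k) = ro i j k.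
Proof. by apply: ro_transfer => x y _ _; rewrite Ppos_mono. Qed.

Lemma Ppos0 a b c : Ppos a b c 0 = a.
Proof. rewrite /Ppos /=; lia. Qed.
Lemma Ppos1 a b c : Ppos a b c 1 = a + 1.
Proof. rewrite /Ppos /=; lia. Qed.
Lemma Ppos2 a b c : Ppos a b c 2 = a + (2 + b).
Proof. rewrite /Ppos /=; lia. Qed.
Lemma Ppos3 a b c : Ppos a b c 3 = a + (2 + (b + 1)).
Proof. rewrite /Ppos /=; lia. Qed.
Lemma Ppos4 a b c : Ppos a b c 4 = a + (2 + (b + (2 + c))).
Proof. rewrite /Ppos /=; lia. Qed.
Lemma Ppos5 a b c : Ppos a b c 5 = a + (2 + (b + (2 + (c + 1)))).
Proof. rewrite /Ppos /=; lia. Qed.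

Lemma idx_at' (w s1 s2 : gword) x k : w = s1 ++ x :: s2 -> uniq w -> size s1 = k -> index x w = k.
Proof. by move=> -> Hu <-; apply: idx_at. Qed.

Lemma pair_lab (y z : letter) x x' : pair_is y z x x' -> (x \in [:: y.1; z.1]) && (x' \in [:: y.1; z.1]).
Proof. by rewrite /pair_is !inE => /orP [] /andP [/eqP -> /eqP ->]; rewrite !eqxx ?orbT. Qed.
Section R3.
Variables (u1 u2 u3 u4 : gword) (p1 p2 q1 q2 r1 r2 : letter).
Let W := u1 ++ [:: p1; p2] ++ u2 ++ [:: q1; q2] ++ u3 ++ [:: r1; r2] ++ u4.
Let W1 := u1 ++ [:: p2; p1] ++ u2 ++ [:: q1; q2] ++ u3 ++ [:: r1; r2] ++ u4.
Let W2 := u1 ++ [:: p2; p1] ++ u2 ++ [:: q2; q1] ++ u3 ++ [:: r1; r2] ++ u4.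
Let W' := u1 ++ [:: p2; p1] ++ u2 ++ [:: q2; q1] ++ u3 ++ [:: r2; r1] ++ u4.

Lemma pW1 : perm_eq W W1. Proof. exact: perm_sw. Qed.
Lemma pW2 : perm_eq W W2.
Proof.
apply: (perm_trans pW1).
have -> : W1 = (u1 ++ [:: p2; p1] ++ u2) ++ q1 :: q2 :: u3 ++ [:: r1; r2] ++ u4 by rewrite /W1 -!catA.
have -> : W2 = (u1 ++ [:: p2; p1] ++ u2) ++ q2 :: q1 :: u3 ++ [:: r1; r2] ++ u4 by rewrite /W2 -!catA.
exact: perm_sw.
Qed.
Lemma pW' : perm_eq W W'.
Proof.
apply: (perm_trans pW2).
have -> : W2 = (u1 ++ [:: p2; p1] ++ u2 ++ [:: q2; q1] ++ u3) ++ r1 :: r2 :: u4 by rewrite /W2 -!catA.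
have -> : W' = (u1 ++ [:: p2; p1] ++ u2 ++ [:: q2; q1] ++ u3) ++ r2 :: r1 :: u4 by rewrite /W' -!catA.
exact: perm_sw.
Qed.

Lemma R3_wf : gauss_wf W = gauss_wf W'.
Proof. exact: wf_perm pW'. Qed.

Lemma R3_inv n : gauss_wf W -> tri_ok p1 p2 q1 q2 r1 r2 -> inv W n = inv W' n.
Proof.
move=> wf [x12 [x13 [x23 [[Hu3 Hp Hq Hr] Htc]]]].
have HuW : uniq W by case/andP: wf.
have wf' : gauss_wf W' by rewrite -R3_wf.
set tri := [:: x12; x13; x23].
have [n12 n13 n23] : [/\ x12 != x13, x12 != x23 & x13 != x23].
  by move: Hu3; rewrite /= !inE !negb_or andbT => /andP [/andP [-> ->] ->].
have Lp : [/\ p1.1 \in tri, p2.1 \in tri & p1.1 != p2.1].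
  move: Hp; rewrite /pair_is => /orP [] /andP [/eqP -> /eqP ->];
  by split; rewrite /tri ?inE ?eqxx ?orbT // eq_sym.
have Lq : [/\ q1.1 \in tri, q2.1 \in tri & q1.1 != q2.1].
  move: Hq; rewrite /pair_is => /orP [] /andP [/eqP -> /eqP ->];
  by split; rewrite /tri ?inE ?eqxx ?orbT // eq_sym.
have Lr : [/\ r1.1 \in tri, r2.1 \in tri & r1.1 != r2.1].
  move: Hr; rewrite /pair_is => /orP [] /andP [/eqP -> /eqP ->];
  by split; rewrite /tri ?inE ?eqxx ?orbT // eq_sym.
have inW : forall c b, c \in labels W -> (c, b) \in W by move=> c b Hc; apply: wf_mem.
have npair : forall (y z : letter) c d, y.1 \in tri -> z.1 \in tri -> ~~ ((c \in tri) && (d \in tri)) ->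
    ~~ pair_is y z c d.
  move=> y z c d Hy Hz; apply: contra; rewrite /pair_is => /orP [] /andP [/eqP <- /eqP <-];
  by rewrite Hy Hz.
have Hnb : forall c d, c \in labels W -> d \in labels W -> ~~ ((c \in tri) && (d \in tri)) ->
    ind_contrib W' TT c d = ind_contrib W TT c d.
  move=> c d Hc Hd Hcd.
  case: Lp => Lp1 Lp2 Lp3; case: Lq => Lq1 Lq2 Lq3; case: Lr => Lr1 Lr2 Lr3.
  have E1 : W' = (u1 ++ [:: p2; p1] ++ u2 ++ [:: q2; q1] ++ u3) ++ r2 :: r1 :: u4 by rewrite /W' -!catA.
  have E2 : W2 = (u1 ++ [:: p2; p1] ++ u2 ++ [:: q2; q1] ++ u3) ++ r1 :: r2 :: u4 by rewrite /W2 -!catA.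
  have E3 : W2 = (u1 ++ [:: p2; p1] ++ u2) ++ q2 :: q1 :: u3 ++ [:: r1; r2] ++ u4 by rewrite /W2 -!catA.
  have E4 : W1 = (u1 ++ [:: p2; p1] ++ u2) ++ q1 :: q2 :: u3 ++ [:: r1; r2] ++ u4 by rewrite /W1 -!catA.
  have E5 : W1 = u1 ++ p2 :: p1 :: u2 ++ [:: q1; q2] ++ u3 ++ [:: r1; r2] ++ u4 by [].
  have E6 : W = u1 ++ p1 :: p2 :: u2 ++ [:: q1; q2] ++ u3 ++ [:: r1; r2] ++ u4 by [].
  have U2 : uniq W2 by rewrite -(perm_uniq pW2).
  have U1 : uniq W1 by rewrite -(perm_uniq pW1).
  have M2 : forall x b, x \in labels W -> (x, b) \in W2 by move=> x b Hx; rewrite -(perm_mem pW2) inW.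
  have M1 : forall x b, x \in labels W -> (x, b) \in W1 by move=> x b Hx; rewrite -(perm_mem pW1) inW.
  rewrite E1 swap_contrib -?E2 //; [|by move=> b; apply: M2|by move=> b; apply: M2|exact: npair].
  rewrite E3 swap_contrib -?E4 //; [|by move=> b; apply: M1|by move=> b; apply: M1|exact: npair].
  rewrite E5 swap_contrib -?E6 //; [by move=> b; apply: inW|by move=> b; apply: inW|exact: npair].
have HuW' : uniq W' by rewrite -(perm_uniq pW').
set P := Ppos (size u1) (size u2) (size u3).
have HP : forall i j k, ro (P i) (P j) (P k) = ro i j k by move=> i j k; apply: Ppos_ro.
have i1 : index p1 W = P 0.
  apply: (@idx_at' W u1 (p2 :: u2 ++ [:: q1; q2] ++ u3 ++ [:: r1; r2] ++ u4)); [by [] | exact: HuW |].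
  by rewrite /P ?size_cat /= ?Ppos0 ?Ppos1 ?Ppos2 ?Ppos3 ?Ppos4 ?Ppos5.
have i2 : index p2 W = P 1.
  apply: (@idx_at' W (u1 ++ [:: p1]) (u2 ++ [:: q1; q2] ++ u3 ++ [:: r1; r2] ++ u4)); [by rewrite /W -!catA | exact: HuW |].
  by rewrite /P ?size_cat /= ?Ppos0 ?Ppos1 ?Ppos2 ?Ppos3 ?Ppos4 ?Ppos5.
have i3 : index q1 W = P 2.
  apply: (@idx_at' W (u1 ++ [:: p1; p2] ++ u2) (q2 :: u3 ++ [:: r1; r2] ++ u4)); [by rewrite /W -!catA | exact: HuW |].
  by rewrite /P ?size_cat /= ?Ppos0 ?Ppos1 ?Ppos2 ?Ppos3 ?Ppos4 ?Ppos5.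
have i4 : index q2 W = P 3.
  apply: (@idx_at' W (u1 ++ [:: p1; p2] ++ u2 ++ [:: q1]) (u3 ++ [:: r1; r2] ++ u4)); [by rewrite /W -!catA | exact: HuW |].
  by rewrite /P ?size_cat /= ?Ppos0 ?Ppos1 ?Ppos2 ?Ppos3 ?Ppos4 ?Ppos5.
have i5 : index r1 W = P 4.
  apply: (@idx_at' W (u1 ++ [:: p1; p2] ++ u2 ++ [:: q1; q2] ++ u3) (r2 :: u4)); [by rewrite /W -!catA | exact: HuW |].
  by rewrite /P ?size_cat /= ?Ppos0 ?Ppos1 ?Ppos2 ?Ppos3 ?Ppos4 ?Ppos5.
have i6 : index r2 W = P 5.
  apply: (@idx_at' W (u1 ++ [:: p1; p2] ++ u2 ++ [:: q1; q2] ++ u3 ++ [:: r1]) u4); [by rewrite /W -!catA | exact: HuW |].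
  by rewrite /P ?size_cat /= ?Ppos0 ?Ppos1 ?Ppos2 ?Ppos3 ?Ppos4 ?Ppos5.
have j2 : index p2 W' = P 0.
  apply: (@idx_at' W' u1 (p1 :: u2 ++ [:: q2; q1] ++ u3 ++ [:: r2; r1] ++ u4)); [by [] | exact: HuW' |].
  by rewrite /P ?size_cat /= ?Ppos0 ?Ppos1 ?Ppos2 ?Ppos3 ?Ppos4 ?Ppos5.
have j1 : index p1 W' = P 1.
  apply: (@idx_at' W' (u1 ++ [:: p2]) (u2 ++ [:: q2; q1] ++ u3 ++ [:: r2; r1] ++ u4)); [by rewrite /W' -!catA | exact: HuW' |].
  by rewrite /P ?size_cat /= ?Ppos0 ?Ppos1 ?Ppos2 ?Ppos3 ?Ppos4 ?Ppos5.
have j4 : index q2 W' = P 2.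
  apply: (@idx_at' W' (u1 ++ [:: p2; p1] ++ u2) (q1 :: u3 ++ [:: r2; r1] ++ u4)); [by rewrite /W' -!catA | exact: HuW' |].
  by rewrite /P ?size_cat /= ?Ppos0 ?Ppos1 ?Ppos2 ?Ppos3 ?Ppos4 ?Ppos5.
have j3 : index q1 W' = P 3.
  apply: (@idx_at' W' (u1 ++ [:: p2; p1] ++ u2 ++ [:: q2]) (u3 ++ [:: r2; r1] ++ u4)); [by rewrite /W' -!catA | exact: HuW' |].
  by rewrite /P ?size_cat /= ?Ppos0 ?Ppos1 ?Ppos2 ?Ppos3 ?Ppos4 ?Ppos5.
have j6 : index r2 W' = P 4.
  apply: (@idx_at' W' (u1 ++ [:: p2; p1] ++ u2 ++ [:: q2; q1] ++ u3) (r1 :: u4)); [by rewrite /W' -!catA | exact: HuW' |].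
  by rewrite /P ?size_cat /= ?Ppos0 ?Ppos1 ?Ppos2 ?Ppos3 ?Ppos4 ?Ppos5.
have j5 : index r1 W' = P 5.
  apply: (@idx_at' W' (u1 ++ [:: p2; p1] ++ u2 ++ [:: q2; q1] ++ u3 ++ [:: r2]) u4); [by rewrite /W' -!catA | exact: HuW' |].
  by rewrite /P ?size_cat /= ?Ppos0 ?Ppos1 ?Ppos2 ?Ppos3 ?Ppos4 ?Ppos5.
have Hun6 : uniq [:: p1; p2; q1; q2; r1; r2].
  apply: (@map_uniq _ _ (index^~ W)); rewrite /= i1 i2 i3 i4 i5 i6.
  have : uniq (map P (iota 0 6)) by rewrite (map_inj_uniq (@Ppos_inj _ _ _)).
  by [].
have M6 : all (mem W) [:: p1; p2; q1; q2; r1; r2].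
  by rewrite /= /W !mem_cat !inE !eqxx !orbT.
have Tin : forall t, t \in tri -> t \in labels W.
  move: M6 => /= /and4P [Mp1 Mp2 Mq1 /and3P [Mq2 _ _]].
  move=> t; rewrite /tri !inE => /or3P [] /eqP ->.
  - by move: (pair_lab Hp) => /andP [+ _]; rewrite !inE => /orP [] /eqP ->; apply: lab_in.
  - by move: (pair_lab Hp) => /andP [_ +]; rewrite !inE => /orP [] /eqP ->; apply: lab_in.
  - by move: (pair_lab Hq) => /andP [_ +]; rewrite !inE => /orP [] /eqP ->; apply: lab_in.
have Hlab : perm_eq (labels W) (labels W') by apply: labels_perm_mem => z; rewrite (perm_mem pW').
apply: inv_eq => // c Hc.
case Ct : (c \in tri); last first.
  by apply: J_eq => // d Hd Hdc; rewrite Hnb // Ct.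
set rest := filter (predC (fun d => d \in tri)) (labels W).
have HT : perm_eq (labels W) (tri ++ rest).
  apply: uniq_perm; first exact: labels_uniq.
    rewrite cat_uniq Hu3 filter_uniq ?labels_uniq // andbT.
    by apply/hasPn => d; rewrite mem_filter /= => /andP [].
  move=> d; rewrite mem_cat mem_filter /=.
  by case Hd: (d \in tri) => //=; rewrite Tin.
have HT' : perm_eq (labels W') (tri ++ rest) by apply: (perm_trans _ HT); rewrite perm_sym.
rewrite /J /Ind (perm_big _ HT) (perm_big _ HT') !big_cat /=.
congr (_ + _)%R.
  by symmetry; apply: (tri_core Hu3 Hp Hq Hr Htc Hun6 HP i1 i2 i3 i4 i5 i6 j1 j2 j3 j4 j5 j6 Ct).
rewrite big_seq_cond [in RHS]big_seq_cond; apply: eq_bigr => d /andP [Hd _].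
move: Hd; rewrite mem_filter /= => /andP [Hdt Hd].
by rewrite Hnb // Ct (negbTE Hdt).
Qed.
End R3.

Lemma move_inv x y : flat_move x y -> (gauss_wf x <-> gauss_wf y) /\
  (gauss_wf x -> forall n, n != 0%R -> inv x n = inv y n).
Proof.
case=> {x y}.
- move=> w; split; first by rewrite (wf_perm (permEl (perm_rot 1 w))).
  by move=> wf n Hn; apply: rot_inv.
- move=> w f finj; change (map (fun e : letter => (f e.1, e.2)) w) with (map (rlF f) w).
  split; first by rewrite wf_rl.
  by move=> _ n _; apply: rl_inv.
- move=> u v a b Hf; split; first by rewrite R1_wf.
  by move=> wf n Hn; rewrite R1_inv.
- move=> u1 u2 u3 a b t swap Hab Hfa Hfb; split; first by rewrite R2_wf.
  by move=> wf n Hn; rewrite R2_inv.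
- move=> u1 u2 u3 u4 p1 p2 q1 q2 r1 r2 Ht; split; first by rewrite R3_wf.
  by move=> wf n Hn; apply: R3_inv.
Qed.

Lemma equiv_inv x y : flat_equiv x y -> (gauss_wf x <-> gauss_wf y) /\
  (gauss_wf x -> forall n, n != 0%R -> inv x n = inv y n).
Proof.
elim=> {x y} [x y /move_inv //| x | x y _ [H1 H2] | x y z _ [H1 H2] _ [H3 H4]].
- by [].
- split; first by split=> /H1.
  by move=> /H1 wx n Hn; rewrite H2.
- split; first by split=> [/H1/H3 | /H3/H1].
  by move=> wx n Hn; rewrite H2 // H4 //; apply/H1.
Qed.

Theorem corollary3p5 (w : gword) (s : nat -> bool) :
  gauss_wf w ->
  writhe_poly w s <> (fun n : int => writhe_poly w s (- n)%R) ->
  ~ flat_equiv (flat_of w s) trivial_flat.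
Proof.
move=> wf Hneq /equiv_inv [_ H]; apply: Hneq; apply: functional_extensionality => n.
case: (eqVneq n 0%R) => [->|Hn]; first by rewrite oppr0.
have := H (wf_flat s wf) n Hn; rewrite -writhe_inv // /inv big_nil => /eqP.
by rewrite subr_eq0 => /eqP.
Qed.
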